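(* In the setting of the context, \[ C_{I_0}(I)=\{(w_t,w_x)\in\mathbb{R}\oplus N_\mathbb{R} \mid \operatorname{trop}(g_j)(\varphi(w_x))+w_t\ \ge\ \operatorname{trop}(m_j)(\varphi(w_x))\ \text{ for all } j=1,\dots,c\}. \] Equivalently, $C_{I_0}(I)$ is the set of $(w_t,w_x)$ with $w_t+\langle u,w_x\rangle\ge0$ for every $j$ and every $u\in M$ such that $x^{A(u)}m_j$ is a monomial occurring in $g_j$.
   Context: Setting: let $N\cong\mathbb{Z}^n$, $M=\operatorname{Hom}(N,\mathbb{Z})$, with pairing $\langle\cdot,\cdot\rangle$. Let $\Delta\subset M_\mathbb{R}$ be a reflexive polytope, $\Sigma\subset N_\mathbb{R}$ its normal fan, and $Y=\mathbb{P}(\Delta)$. Write $\Sigma(1)$ for the set of rays, $\hat r$ for the primitive generator of $r$, and $D_r$ for the corresponding divisor. The Cox ring $S=\mathbb{C}[x_r\mid r\in\Sigma(1)]$ is graded by $A_{n-1}(Y)$ via $\deg\prod x_r^{a_r}=[\sum a_rD_r]$. We have $0\to M\xrightarrow{A}\mathbb{Z}^{\Sigma(1)}\to A_{n-1}(Y)\to 0$ with $A(u)=(\langle u,\hat r\rangle)_r$. Let $\Sigma(1)=J_1\cup\dots\cup J_c$ be a nef partition: a disjoint union such that each $E_j=\sum_{r\in J_j}D_r$ is Cartier and globally generated. Set $m_j=\prod_{r\in J_j}x_r$ and $I_0=\langle m_1,\dots,m_c\rangle$. Let $g_j\in S_{[E_j]}$ be a general linear combination, with generic nonzero coefficients, of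 all monomials of degree $[E_j]$ not in $I_0$. Let $I=\langle t g_j+m_j\mid j=1,\dots,c\rangle\subset\mathbb{C}[t]\otimes S$. Weights: for $w_x\in N_\mathbb{R}$, let $\varphi(w_x)\in\mathbb{R}^{\Sigma(1)}$ be any vector with $\sum_r\varphi(w_x)_r\hat r=w_x$. This is well defined modulo vectors inducing the same weight difference on any two monomials of equal degree. Tropicalization: for a polynomial $g=\sum_a c_ax^a$ with $c_a\in\mathbb{C}^*$, set $\operatorname{trop}(g)(\omega)=\min_a\langle a,\omega\rangle$ for $\omega\in\mathbb{R}^{\Sigma(1)}$. Order and cone: fix a monomial order $>$ on $\mathbb{C}[t]\otimes S$ that respects the Cox grading and is local in $t$. For $\omega=(\omega_t,\omega_x)\in\mathbb{R}\times\mathbb{R}^{\Sigma(1)}$, let $>_\omega$ compare monomials $t^kx^a$ first by the weight $k\omega_t+\langle a,\omega_x\rangle$ (larger weight is larger), breaking ties by $>$. Write $L_{>_\omega}(I)$ for the lead ideal. The Gröbner cone of special fiber weights $C_{I_0}(I)\subset\mathbb{R}\oplus N_\mathbb{R}$ is the closure of the cone \[ \{-(w_t,w_x) : L_{>_{(w_t,\varphi(w_x))}}(I)=I_0\cdot(\mathbb{C}[t]\otimes S)\}. \] *)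

(* Defs.v *)
From HB Require Import structures.
From mathcomp Require Import all_boot all_order all_algebra.
From mathcomp Require Import Rstruct.
From mathcomp Require Import complex.
From mathcomp Require Import mpoly.

Set Implicit Arguments.
Unset Strict Implicit.
Unset Printing Implicit Defensive.

Import Order.TTheory GRing.Theory Num.Theory.
Local Open Scope ring_scope.

Notation RR := Rdefinitions.R.
Notation CC := (complex Rdefinitions.R).

(** Conventions.
  - N = Z^n and M = Z^n with the standard dot pairing; N_R = M_R = R^n.
  - The rays of the normal fan Sigma of Delta are indexed by 'I_m; the
    primitive generator of ray r is [v r : 'I_n -> int].
  - Delta = { u in M_R | <u, v r> >= -1 for all r } (facet presentation).
  - The ring C[t] (x) S = C[t, x_r | r] is {mpoly CC[m.+1]}: the variable
    x_r is indexed by [xv r] and t by [tv] (the last index).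
  - A nef partition is a map [part : 'I_m -> 'I_c], J_j = part^-1(j). *)

Definition xv (m : nat) (r : 'I_m) : 'I_m.+1 := widen_ord (leqnSn m) r.
Definition tv (m : nat) : 'I_m.+1 := ord_max.

Definition pairR (n : nat) (w : 'I_n -> RR) (z : 'I_n -> int) : RR :=
  \sum_(i < n) w i * (z i)%:~R.
Definition pairZ (n : nat) (u z : 'I_n -> int) : int :=
  \sum_(i < n) u i * z i.

Definition Amap (n m : nat) (v : 'I_m -> 'I_n -> int) (u : 'I_n -> int)
  : 'I_m -> int := fun r => pairZ u (v r).

Definition in_Delta (n m : nat) (v : 'I_m -> 'I_n -> int) (u : 'I_n -> RR)
  : Prop := forall r, -1 <= pairR u (v r).

Definition active (n m : nat) (v : 'I_m -> 'I_n -> int) (u : 'I_n -> RR)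
  (r : 'I_m) : Prop := pairR u (v r) = -1.

(** The maximal cones of
   the normal fan are the cones sigma_u = cone{ v r | r active at u }. *)
Definition is_vertex (n m : nat) (v : 'I_m -> 'I_n -> int) (u : 'I_n -> RR)
  : Prop :=
  in_Delta v u /\
  (forall w : 'I_n -> RR, (forall r, active v u r -> pairR w (v r) = 0) ->
     forall i, w i = 0).

(** Delta = {u | <u, v r> >= -1} is a reflexive polytope whose facets are
   exactly the hyperplanes <u, v r> = -1 (so that the rays of its normal fan
   are exactly the cones R_{>=0} v r, with primitive generators v r):
   - Delta is bounded,
   - each inequality is irredundant (defines a facet),
   - all vertices of Delta are lattice points of M. *)
Definition reflexive_facets (n m : nat) (v : 'I_m -> 'I_n -> int) : Prop :=
  (exists B : RR, forall u, in_Delta v u -> forall i, `|u i| <= B) /\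
  (forall r, exists u : 'I_n -> RR,
      pairR u (v r) < -1 /\ (forall r', r' != r -> -1 <= pairR u (v r'))) /\
  (forall u, is_vertex v u -> forall i, exists z : int, u i = z%:~R).

(** The torus-invariant Weil divisor D = sum_r a r D_r is Cartier: on each
   maximal cone sigma_u there is m_sigma in M with <m_sigma, v r> = - a r for
   the rays r of sigma_u. *)
Definition cartier_divisor (n m : nat) (v : 'I_m -> 'I_n -> int)
  (a : 'I_m -> int) : Prop :=
  forall u, is_vertex v u ->
    exists msig : 'I_n -> int, forall r, active v u r -> pairZ msig (v r) = - a r.

(** The (Cartier) divisor D is globally generated (basepoint free):
   each m_sigma satisfies <m_sigma, v r> >= - a r for all rays r. *)
Definition globally_generated (n m : nat) (v : 'I_m -> 'I_n -> int)
  (a : 'I_m -> int) : Prop :=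
  forall u, is_vertex v u ->
    forall msig : 'I_n -> int, (forall r, active v u r -> pairZ msig (v r) = - a r) ->
      forall r, - a r <= pairZ msig (v r).

(** exponent vector of E_j = sum_{r in J_j} D_r *)
Definition eJ (m c : nat) (part : 'I_m -> 'I_c) (j : 'I_c) : 'I_m -> int :=
  fun r => ((part r == j) : nat)%:Z.

Definition nef_partition (n m c : nat) (v : 'I_m -> 'I_n -> int)
  (part : 'I_m -> 'I_c) : Prop :=
  (forall j, exists r, part r = j) /\
  (forall j, cartier_divisor v (eJ part j) /\ globally_generated v (eJ part j)).

Definition xexp (m : nat) (mu : 'X_{1..m.+1}) : 'I_m -> int :=
  fun r => (mu (xv r))%:Z.

(** equal Cox degree: a - b in A(M) *)
Definition same_degree (n m : nat) (v : 'I_m -> 'I_n -> int) (a b : 'I_m -> int)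
  : Prop := exists u : 'I_n -> int, forall r, a r - b r = Amap v u r.

Definition mj (m c : nat) (part : 'I_m -> 'I_c) (j : 'I_c) : {mpoly CC[m.+1]} :=
  \prod_(r < m | part r == j) 'X_(xv r).

Definition mon_in_I0 (m c : nat) (part : 'I_m -> 'I_c) (mu : 'X_{1..m.+1}) : Prop :=
  exists j, forall r, part r = j -> (0 < mu (xv r))%N.

Definition gmon (n m c : nat) (v : 'I_m -> 'I_n -> int) (part : 'I_m -> 'I_c)
  (j : 'I_c) (mu : 'X_{1..m.+1}) : Prop :=
  mu (tv m) = 0%N /\ same_degree v (xexp mu) (eJ part j) /\ ~ mon_in_I0 part mu.

Definition g_support (n m c : nat) (v : 'I_m -> 'I_n -> int) (part : 'I_m -> 'I_c)
  (g : 'I_c -> {mpoly CC[m.+1]}) : Prop :=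
  forall j mu, mu \in msupp (g j) <-> gmon v part j mu.

Definition in_I (m c : nat) (part : 'I_m -> 'I_c) (g : 'I_c -> {mpoly CC[m.+1]})
  (f : {mpoly CC[m.+1]}) : Prop :=
  exists h : 'I_c -> {mpoly CC[m.+1]},
    f = \sum_(j < c) h j * ('X_(tv m) * g j + mj part j).

(** [ord mu nu] means mu > nu.  A monomial order: strict total order
   compatible with multiplication of monomials. *)
Definition monomial_order (k : nat) (ord : rel 'X_{1..k}) : Prop :=
  (forall mu, ~~ ord mu mu) /\
  (forall mu nu la, ord mu nu -> ord nu la -> ord mu la) /\
  (forall mu nu, mu != nu -> ord mu nu || ord nu mu) /\
  (forall mu nu la, ord mu nu -> ord (mu + la)%MM (nu + la)%MM).

Definition local_in_t (m : nat) (ord : rel 'X_{1..m.+1}) : Prop :=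
  ord 0%MM U_(tv m)%MM.

(** respects the Cox grading: monomials are first compared by a positive
   real functional on the class group A_{n-1}(Y) (i.e. a functional l on
   Z^{Sigma(1)} vanishing on A(M), with l(D_r) > 0 for all r). *)
Definition respects_cox_grading (n m : nat) (v : 'I_m -> 'I_n -> int)
  (ord : rel 'X_{1..m.+1}) : Prop :=
  exists l : 'I_m -> RR,
    (forall r, 0 < l r) /\
    (forall i, \sum_(r < m) l r * (v r i)%:~R = 0) /\
    (forall mu nu : 'X_{1..m.+1}, \sum_(r < m) l r * (mu (xv r))%:R > \sum_(r < m) l r * (nu (xv r))%:R ->
       ord mu nu).

Definition wt (m : nat) (omt : RR) (omx : 'I_m -> RR) (mu : 'X_{1..m.+1}) : RR :=
  omt * (mu (tv m))%:R + \sum_(r < m) omx r * (mu (xv r))%:R.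

Definition gt_om (m : nat) (ord : rel 'X_{1..m.+1}) (omt : RR) (omx : 'I_m -> RR)
  (mu nu : 'X_{1..m.+1}) : Prop :=
  wt omt omx nu < wt omt omx mu \/ (wt omt omx mu = wt omt omx nu /\ ord mu nu).

Definition is_lead (m : nat) (ord : rel 'X_{1..m.+1}) (omt : RR) (omx : 'I_m -> RR)
  (mu0 : 'X_{1..m.+1}) (f : {mpoly CC[m.+1]}) : Prop :=
  mu0 \in msupp f /\ (forall nu, nu \in msupp f -> nu != mu0 -> gt_om ord omt omx mu0 nu).

(** L_{>_omega}(I) = I_0 (C[t] (x) S), as equality of monomial ideals
   (compared monomial by monomial). *)
Definition lead_ideal_is_I0 (m c : nat) (part : 'I_m -> 'I_c)
  (g : 'I_c -> {mpoly CC[m.+1]}) (ord : rel 'X_{1..m.+1})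
  (omt : RR) (omx : 'I_m -> RR) : Prop :=
  forall mu : 'X_{1..m.+1},
    (exists f, in_I part g f /\ f != 0 /\
        exists mu0, is_lead ord omt omx mu0 f /\ (mu0 <= mu)%MM)
    <-> mon_in_I0 part mu.

Definition is_phi (n m : nat) (v : 'I_m -> 'I_n -> int) (wx : 'I_n -> RR)
  (phi : 'I_m -> RR) : Prop :=
  forall i, \sum_(r < m) phi r * (v r i)%:~R = wx i.

(** the (non-closed) cone:  p = -(w_t, w_x) with L_{>_(w_t, phi(w_x))}(I) = I_0 *)
Definition precone (n m c : nat) (v : 'I_m -> 'I_n -> int) (part : 'I_m -> 'I_c)
  (g : 'I_c -> {mpoly CC[m.+1]}) (ord : rel 'X_{1..m.+1})
  (pt : RR) (px : 'I_n -> RR) : Prop :=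
  forall phi, is_phi v (fun i => - px i) phi ->
    lead_ideal_is_I0 part g ord (- pt) phi.

Definition in_closure (n : nat) (S : RR -> ('I_n -> RR) -> Prop)
  (pt : RR) (px : 'I_n -> RR) : Prop :=
  forall eps : RR, 0 < eps ->
    exists qt qx, S qt qx /\ `|pt - qt| < eps /\ (forall i, `|px i - qx i| < eps).

Definition groebner_cone_I0 (n m c : nat) (v : 'I_m -> 'I_n -> int)
  (part : 'I_m -> 'I_c) (g : 'I_c -> {mpoly CC[m.+1]}) (ord : rel 'X_{1..m.+1})
  (pt : RR) (px : 'I_n -> RR) : Prop :=
  in_closure (precone v part g ord) pt px.

Definition xdot (m : nat) (mu : 'X_{1..m.+1}) (om : 'I_m -> RR) : RR :=
  \sum_(r < m) (mu (xv r))%:R * om r.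

(** trop(f)(om) = min_{a in supp f} <a, om>, with value None (= +oo) for f = 0 *)
Definition trop (m : nat) (f : {mpoly CC[m.+1]}) (om : 'I_m -> RR) : option RR :=
  match msupp f with
  | [::] => None
  | a :: s => Some (foldr (fun b acc => Num.min (xdot b om) acc) (xdot a om) s)
  end.

Definition le_plus (x y : option RR) (s : RR) : Prop :=
  match x, y with
  | _, None => True
  | None, Some _ => False
  | Some a, Some b => a <= b + s
  end.

(** Zariski-genericity of the coefficients of (g_j)_j: the coefficient vector
   (g_j's coefficient at mu)_{(j,mu) : gmon j mu}, enumerated bijectively by
   [e], is not a zero of the nonzero polynomial [P]. *)
Definition enumerates_gmons (n m c : nat) (v : 'I_m -> 'I_n -> int)
  (part : 'I_m -> 'I_c) (N : nat) (e : 'I_N -> 'I_c * 'X_{1..m.+1}) : Prop :=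
  injective e /\ (forall j mu, gmon v part j mu <-> exists k, e k = (j, mu)).

Definition coeff_vector (m c N : nat) (e : 'I_N -> 'I_c * 'X_{1..m.+1})
  (g : 'I_c -> {mpoly CC[m.+1]}) : 'I_N -> CC :=
  fun k => (g (e k).1)@_((e k).2).

(* Main.v *)
Require Import Defs.
From HB Require Import structures.
From mathcomp Require Import all_boot all_order all_algebra.
From mathcomp Require Import Rstruct.
From mathcomp Require Import complex.
From mathcomp Require Import mpoly.
From mathcomp Require Import ring lra zify.
From Stdlib Require Import ClassicalEpsilon.
Import Order.TTheory GRing.Theory Num.Theory.
Local Open Scope ring_scope.
Set Implicit Arguments.
Unset Strict Implicit.

Lemma exists_wmax (T : eqType) (s : seq T) (f : T -> RR) :
  s != [::] -> exists2 x, x \in s & forall y, y \in s -> f y <= f x.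
Proof.
elim: s => [//|a s IH] _.
case: s IH => [|b s] IH.
  by exists a; rewrite ?mem_seq1 // => y; rewrite mem_seq1 => /eqP->.
have [x xs Hx] := IH isT.
case: (leP (f a) (f x)) => H.
  exists x; first by rewrite in_cons xs orbT.
  by move=> y; rewrite in_cons => /orP[/eqP->//|/Hx].
exists a; first by rewrite in_cons eqxx.
move=> y; rewrite in_cons => /orP[/eqP->//|/Hx Hy].
exact: (le_trans Hy (ltW H)).
Qed.

Lemma count_lt (T : eqType) (P Q : pred T) (s : seq T) x :
  (forall y, Q y -> P y) -> x \in s -> P x -> ~~ Q x -> (count Q s < count P s)%N.

Proof.
move=> QP; elim: s => [//|a s IH]; rewrite in_cons => /orP[/eqP<-|xs] Px nQx /=.
  rewrite Px (negbTE nQx) add0n add1n ltnS.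
  by apply: sub_count => y; apply: QP.
have := IH xs Px nQx.
case: (boolP (Q a)) => Qa; first by rewrite (QP _ Qa) /= !add1n ltnS.
by case: (P a) => /=; rewrite ?add1n ?add0n // => H; apply: (ltn_trans H).
Qed.

Section Descent.
Variable k0 : nat.
Local Notation MP := {mpoly CC[k0]}.
Local Notation MN := 'X_{1..k0}.
Variable w : MN -> RR.
Hypothesis wD : forall a b, w (a + b)%MM = w a + w b.

Lemma supp_mulP (p q : MP) nu : nu \in msupp (p * q) ->
  exists a b, [/\ a \in msupp p, b \in msupp q & nu = (a + b)%MM].
Proof.
move/msuppM_le/allpairsP => [[a b] /= [Ha Hb ->]]; by exists a, b.
Qed.

Lemma supp_mul_le (p q : MP) x y :
  (forall nu, nu \in msupp p -> w nu <= x) ->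
  (forall nu, nu \in msupp q -> w nu <= y) ->
  forall nu, nu \in msupp (p * q) -> w nu <= x + y.
Proof.
move=> Hp Hq nu /supp_mulP [a [b [Ha Hb ->]]]; rewrite wD.
exact: lerD (Hp _ Ha) (Hq _ Hb).
Qed.

Lemma supp_mul_lt (p q : MP) x y :
  (forall nu, nu \in msupp p -> w nu <= x) ->
  (forall nu, nu \in msupp q -> w nu < y) ->
  forall nu, nu \in msupp (p * q) -> w nu < x + y.
Proof.
move=> Hp Hq nu /supp_mulP [a [b [Ha Hb ->]]]; rewrite wD.
exact: ler_ltD (Hp _ Ha) (Hq _ Hb).
Qed.

Lemma coef_out (p : MP) nu : nu \notin msupp p -> p@_nu = 0.
Proof. by rewrite -mcoeff_eq0 => /eqP. Qed.

Lemma bound_seq (T : eqType) (s : seq T) (f : T -> RR) :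
  exists B, forall x, x \in s -> f x <= B.
Proof.
exists (\sum_(y <- s) `|f y|) => x; elim: s => [//|a s IH].
rewrite in_cons big_cons => /orP[/eqP->|/IH H].
  by rewrite -[X in X <= _]addr0 lerD ?ler_norm ?sumr_ge0.
by apply: (le_trans H); rewrite -[X in X <= _]add0r lerD.
Qed.

Variable L : MN -> RR.
Hypothesis LD : forall a b, L (a + b)%MM = L a + L b.
Variable c : nat.
Variable M : 'I_c -> MN.
Variable G : 'I_c -> MP.
Hypothesis HG : forall j b, b \in msupp (G j) -> w b < w (M j) /\ L b = L (M j).
Hypothesis Hcop : forall j k, j != k -> forall i, (M j i == 0%N) || (M k i == 0%N).

Definition FF j := 'X_[M j] + G j.
Definition memI (k : nat) (f : MP) :=
  exists h : 'I_c -> MP, f = \sum_(j < c | (j < k)%N) h j * FF j.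
Definition wmax (f : MP) mu := mu \in msupp f /\ forall nu, nu \in msupp f -> w nu <= w mu.

Lemma memI0 k : memI k 0.
Proof. by exists (fun _ => 0); rewrite big1 // => j _; rewrite mul0r. Qed.

Lemma memID k f g : memI k f -> memI k g -> memI k (f + g).
Proof.
move=> [h1 ->] [h2 ->]; exists (fun j => h1 j + h2 j).
by rewrite -big_split /=; apply: eq_bigr => j _; rewrite mulrDl.
Qed.

Lemma memIM k p f : memI k f -> memI k (p * f).
Proof.
move=> [h ->]; exists (fun j => p * h j).
by rewrite mulr_sumr; apply: eq_bigr => j _; rewrite mulrA.
Qed.

Lemma memIF k (j : 'I_c) : (j < k)%N -> memI k (FF j).
Proof.
move=> jk; exists (fun i => (i == j)%:R).
rewrite (bigD1 j) //= eqxx mul1r big1 ?addr0 // => i /andP[_ /negbTE ->].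
by rewrite mul0r.
Qed.

Lemma memI_sum k (T : eqType) (r : seq T) (F : T -> MP) :
  (forall x, x \in r -> memI k (F x)) -> memI k (\sum_(x <- r) F x).
Proof.
elim: r => [|a r IH] H; first by rewrite big_nil; apply: memI0.
rewrite big_cons; apply: memID; first by apply: H; rewrite in_cons eqxx.
by apply: IH => x xr; apply: H; rewrite in_cons xr orbT.
Qed.

Lemma FF_supp j nu : nu \in msupp (FF j) -> w nu <= w (M j) /\ L nu = L (M j).
Proof.
move/msuppD_le; rewrite mem_cat msuppX mem_seq1 => /orP[/eqP->//|/HG [H1 H2]].
by split=> //; apply: ltW.
Qed.

Definition Qk k := forall f mu, memI k f -> wmax f mu ->
  exists j : 'I_c, (j < k)%N /\ (M j <= mu)%MM.

Lemma descent k (kk : 'I_c) : kk = k :> nat -> Qk k -> forall f mu, wmax f mu ->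
  forall D hi (s : seq RR),
  (forall nu, L nu <= D -> w mu - w (M kk) <= w nu -> w nu <= hi -> w nu \in s) ->
  forall n h f', count (fun x => has (fun nu => x <= w nu) (msupp h)) s = n ->
  (forall nu, nu \in msupp h -> L nu <= D /\ w nu <= hi) -> memI k f' ->
  f = f' + h * FF kk ->
  exists j : 'I_c, (j < k.+1)%N /\ (M j <= mu)%MM.
Proof.
move=> Hkk Qk0 f mu [muf mumax] D hi s Hs n.
elim/ltn_ind: n => n IHn h f' Hcnt Hinv Hf' Ef.
have [h0|hn0] := eqVneq h 0.
  move: Ef; rewrite h0 mul0r addr0 => Ef; subst f'.
  have [j [jk H]] := Qk0 f mu Hf' (conj muf mumax).
  by exists j; split => //; apply: ltnW.
have [nu0 nu0h Hnu0] : exists2 x, x \in msupp h & forall y, y \in msupp h -> w y <= w x.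
  by apply: exists_wmax; rewrite msupp_eq0.
set B := w nu0 + w (M kk).
have hFle : forall nu, nu \in msupp (h * FF kk) -> w nu <= B.
  by apply: supp_mul_le => // x /FF_supp [].
have hGlt : forall nu, nu \in msupp (h * G kk) -> w nu < B.
  by apply: supp_mul_lt => // x /HG [].
have coefhF : forall nu, B <= w nu -> (h * FF kk)@_nu = (h * 'X_[M kk])@_nu.
  move=> nu Hnu; rewrite /FF mulrDr mcoeffD [(h * G kk)@_nu]coef_out ?addr0 //.
  by apply/negP => /hGlt; rewrite ltNge Hnu.
have Ef' : forall nu, f'@_nu = f@_nu - (h * FF kk)@_nu.
  by move=> nu; rewrite Ef mcoeffD addrK.
case: (ltP (w mu) B) => HmuB.
- set top := [seq nu <- msupp h | w nu == w nu0].
  have topdiv : forall nu, nu \in top -> exists j : 'I_c, (j < k)%N /\ (M j <= nu)%MM.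
    move=> nu; rewrite mem_filter => /andP[/eqP wnu nuh].
    set nu' := (M kk + nu)%MM.
    have wnu' : w nu' = B by rewrite /nu' wD wnu addrC.
    have c1 : (h * FF kk)@_nu' = h@_nu by rewrite coefhF ?wnu' // mcoeffMX.
    have c2 : f@_nu' = 0.
      by apply: coef_out; apply/negP => /mumax; rewrite wnu' leNgt HmuB.
    have nu'f' : nu' \in msupp f'.
      by rewrite mcoeff_msupp Ef' c1 c2 sub0r oppr_eq0 -mcoeff_msupp.
    have : wmax f' nu'.
      split => // nu2 nu2f'; rewrite wnu' leNgt; apply/negP => Hlt.
      have e : (h * FF kk)@_nu2 = 0.
        by apply: coef_out; apply/negP => /hFle; rewrite leNgt Hlt.
      move: nu2f'; rewrite mcoeff_msupp Ef' e subr0 -mcoeff_msupp => /mumax Hle.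
      by move: (lt_trans HmuB (lt_le_trans Hlt Hle)); rewrite ltxx.
    move=> /(Qk0 _ _ Hf') [j [jk Hj]]; exists j; split => //.
    have jkk : j != kk by apply: contraTneq jk => ->; rewrite Hkk ltnn.
    apply/mnm_lepP => i; move/mnm_lepP: Hj => /(_ i); rewrite /nu' mnmDE.
    by case/orP: (Hcop jkk i) => /eqP -> //; rewrite add0n.
  pose jsel nu := odflt kk [pick j : 'I_c | (j < k)%N && (M j <= nu)%MM].
  have jselP : forall nu, nu \in top -> (jsel nu < k)%N /\ (M (jsel nu) <= nu)%MM.
    move=> nu /topdiv [j [jk Hj]]; rewrite /jsel; case: pickP => [j' /andP[]//|/(_ j)].
    by rewrite jk Hj.
  pose h' := \sum_(nu <- top) h@_nu *: ('X_[nu - M (jsel nu)] * FF (jsel nu)).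
  have h'I : memI k h'.
    apply: memI_sum => nu /jselP [jk _]; rewrite -mul_mpolyC mulrA.
    by apply: memIM; apply: memIF.
  pose hn := h - h'.
  have Eh : hn = \sum_(nu <- msupp h | w nu != w nu0) h@_nu *: 'X_[nu]
                - \sum_(nu <- top) h@_nu *: ('X_[nu - M (jsel nu)] * G (jsel nu)).
    rewrite /hn {1}[h]mpolyE (bigID (fun nu => w nu == w nu0)) /= -big_filter -/top.
    have -> : h' = \sum_(nu <- top) h@_nu *: 'X_[nu] +
        \sum_(nu <- top) h@_nu *: ('X_[nu - M (jsel nu)] * G (jsel nu)).
      rewrite /h' -big_split /= big_seq [RHS]big_seq; apply: eq_bigr => nu /jselP [_ Hle].
      by rewrite /FF mulrDr -mpolyXD submK // scalerDr.
    by rewrite opprD addrACA subrr add0r.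
  have hnsupp : forall nu, nu \in msupp hn -> w nu < w nu0 /\ L nu <= D.
    move=> nu; rewrite Eh => /msuppB_le; rewrite mem_cat => /orP[].
      move/msupp_sum_le => /flattenP [sq /mapP [nu1 + ->]].
      rewrite mem_filter => /andP [Hne nu1h] /msuppZ_le; rewrite msuppX mem_seq1 => /eqP ->.
      split; last exact: (Hinv _ nu1h).1.
      by have := Hnu0 _ nu1h; rewrite le_eqVlt (negbTE Hne).
    move/msupp_sum_le => /flattenP [sq /mapP [nu1 + ->]].
    rewrite mem_filter /= => nu1top /msuppZ_le /supp_mulP [a [b' [Ha Hb ->]]].
    move: Ha; rewrite msuppX mem_seq1 => /eqP Ea.
    have [_ Hle] := jselP _ nu1top; have [wb Lb] := HG Hb.
    move: nu1top; rewrite mem_filter => /andP [/eqP wnu1 nu1h].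
    have Enu1 : nu1 = (a + M (jsel nu1))%MM by rewrite Ea submK.
    split.
      by rewrite wD -wnu1 Enu1 wD ltrD2l.
    by rewrite LD Lb -LD -Enu1; exact: (Hinv _ nu1h).1.
  have Hcount : (count (fun x : RR => has (fun nu => (x <= w nu)%R) (msupp hn)) s < n)%N.
    rewrite -Hcnt; apply: (count_lt (x := w nu0)).
    - move=> y /hasP [nu nuhn Hy]; apply/hasP; exists nu0 => //.
      exact: le_trans Hy (ltW (hnsupp _ nuhn).1).
    - apply: Hs; [exact: (Hinv _ nu0h).1 | | exact: (Hinv _ nu0h).2].
      by rewrite lerBlDr ltW.
    - by apply/hasP; exists nu0.
    - by apply/hasPn => nu /hnsupp [H _]; rewrite -ltNge.
  apply: (IHn _ Hcount hn (f' + h' * FF kk) erefl).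
  - move=> nu /hnsupp [H1 H2]; split=> //.
    exact: le_trans (ltW H1) (Hinv _ nu0h).2.
  - by apply: memID => //; rewrite mulrC; apply: memIM.
  - by rewrite Ef /hn mulrBl -addrA [_ * FF kk + (_ - _)]addrC subrK.
- have : f@_mu != 0 by rewrite -mcoeff_msupp.
  rewrite Ef mcoeffD.
  case: (eqVneq ((h * FF kk)@_mu) 0) => [e|ne] Hne.
    rewrite e addr0 in Hne.
    have : wmax f' mu.
      split; first by rewrite mcoeff_msupp.
      move=> nu nuf'; rewrite leNgt; apply/negP => Hlt.
      have e2 : (h * FF kk)@_nu = 0.
        apply: coef_out; apply/negP => /hFle Hle.
        by move: (le_lt_trans HmuB (lt_le_trans Hlt Hle)); rewrite ltxx.
      by move: nuf'; rewrite mcoeff_msupp Ef' e2 subr0 -mcoeff_msupp => /mumax; rewrite leNgt Hlt.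
    case/(Qk0 _ _ Hf') => j [jk Hj]; exists j; split=> //; exact: ltnW.
  exists kk; split; first by rewrite Hkk.
  move: ne; rewrite coefhF // -mcoeff_msupp (perm_mem (msuppMX _ _)) => /mapP [m' _ ->].
  by apply/mnm_lepP => i; rewrite mnmDE leq_addr.
Qed.

Hypothesis Hfin : forall D lo hi : RR, exists s : seq RR,
  forall nu, L nu <= D -> lo <= w nu -> w nu <= hi -> w nu \in s.

Lemma Qall k : Qk k.
Proof.
elim: k => [|k IH] f mu.
  by move=> [h ->] [+ _]; rewrite big_pred0 ?msupp0 // => j; rewrite ltn0.
case: (ltnP k c) => Hkc.
  pose kk : 'I_c := Ordinal Hkc.
  move=> [h Ef] Hw.
  have Ef2 : f = \sum_(j < c | (j < k)%N) h j * FF j + h kk * FF kk.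
    rewrite Ef (bigD1 kk) //= addrC; congr (_ + _); apply: eq_bigl => j.
    by rewrite ltnS -val_eqE /= andbC -ltn_neqAle.
  have [D HD] := bound_seq (msupp (h kk)) L.
  have [hi Hhi] := bound_seq (msupp (h kk)) w.
  have [s Hs] := Hfin D (w mu - w (M kk)) hi.
  apply: (@descent k kk erefl IH f mu Hw D hi s Hs _ (h kk)
     (\sum_(j < c | (j < k)%N) h j * FF j) erefl).
  - by move=> nu nuh; split; [apply: HD | apply: Hhi].
  - by exists h.
  - exact: Ef2.
move=> [h Ef] Hw.
have [j [jk Hj]] : exists j : 'I_c, (j < k)%N /\ (M j <= mu)%MM.
  apply: (IH f mu) => //; exists h; rewrite Ef; apply: eq_bigl => j.
  by rewrite ltnS (leq_trans (ltn_ord j) Hkc) (leq_trans (ltnW (ltn_ord j)) Hkc).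
by exists j; split => //; apply: ltnW.
Qed.

Lemma ideal_lead (h : 'I_c -> MP) f mu : f = \sum_(j < c) h j * FF j -> wmax f mu ->
  exists j, (M j <= mu)%MM.
Proof.
move=> Ef Hw.
have HI : memI c f by exists h; rewrite Ef; apply: eq_bigl => j; rewrite ltn_ord.
by have [j [_ Hj]] := Qall HI Hw; exists j.
Qed.

End Descent.

Section Basic.
Variable m : nat.
Local Notation MN := 'X_{1..m.+1}.

Lemma ord_split (i : 'I_m.+1) : i = tv m \/ exists r, i = xv r.
Proof.
case: (ltnP i m) => H.
  by right; exists (Ordinal H); apply: val_inj.
left; apply: val_inj => /=; apply/eqP; rewrite eqn_leq H andbT -ltnS; exact: ltn_ord.
Qed.

Lemma xv_inj : injective (@xv m).
Proof. by move=> a b /(congr1 val) /= /val_inj. Qed.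

Lemma xv_tv r : (xv r == tv m) = false.
Proof. by apply/negbTE; rewrite -val_eqE /= neq_ltn ltn_ord. Qed.

Lemma wtD omt (omx : 'I_m -> RR) (a b : MN) :
  wt omt omx (a + b)%MM = wt omt omx a + wt omt omx b.
Proof.
rewrite /wt mnmDE natrD mulrDr.
under eq_bigr do rewrite mnmDE natrD mulrDr.
rewrite big_split /=; lra.
Qed.

Definition Lf (l : 'I_m -> RR) (nu : MN) : RR := \sum_(r < m) l r * (nu (xv r))%:R.

Lemma LfD l (a b : MN) : Lf l (a + b)%MM = Lf l a + Lf l b.
Proof.
rewrite /Lf -big_split /=; apply: eq_bigr => r _.
by rewrite mnmDE natrD mulrDr.
Qed.

Lemma wt_U omt (omx : 'I_m -> RR) : wt omt omx U_(tv m)%MM = omt.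
Proof.
rewrite /wt mnm1E eqxx mulr1 big1 ?addr0 // => r _.
by rewrite mnm1E eq_sym xv_tv mulr0.
Qed.

Lemma Lf_U l : Lf l U_(tv m)%MM = 0.
Proof. by rewrite /Lf big1 // => r _; rewrite mnm1E eq_sym xv_tv mulr0. Qed.

Section Mj.
Variable c : nat.
Variable part : 'I_m -> 'I_c.

Definition mjm (j : 'I_c) : MN := (\sum_(r < m | part r == j) U_(xv r))%MM.

Lemma mj_X j : mj part j = 'X_[mjm j].
Proof. by rewrite /mj /mjm (big_morph _ (@mpolyXD _ _) (@mpolyX0 _ _)). Qed.

Lemma sum_eq1 (P : pred 'I_m) r :
  (\sum_(r' < m | P r') (r' == r : nat))%N = P r.
Proof.
rewrite big_mkcond (bigD1 r) //= eqxx big1 ?addn0; first by case: (P r).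
by move=> i /negbTE ->; case: (P i).
Qed.

Lemma mjm_x j r : mjm j (xv r) = (part r == j).
Proof.
rewrite /mjm mnm_sumE -(sum_eq1 (fun r' => part r' == j) r).
by apply: eq_bigr => r' _; rewrite mnm1E (inj_eq xv_inj).
Qed.

Lemma mjm_t j : mjm j (tv m) = 0%N.
Proof. by rewrite /mjm mnm_sumE big1 // => r _; rewrite mnm1E xv_tv. Qed.

Lemma mjm_cop j k : j != k -> forall i, (mjm j i == 0%N) || (mjm k i == 0%N).
Proof.
move=> jk i; case: (ord_split i) => [Hi|[r Hi]]; subst i; first by rewrite mjm_t.
rewrite !mjm_x; case: (eqVneq (part r) j) => [E|E] //.
by rewrite E (negbTE jk) orbT.
Qed.

Lemma mjm_le j (mu : MN) : (mjm j <= mu)%MM <-> (forall r, part r = j -> (0 < mu (xv r))%N).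
Proof.
split.
  by move/mnm_lepP => H r Hr; move: (H (xv r)); rewrite mjm_x Hr eqxx.
move=> H; apply/mnm_lepP => i; case: (ord_split i) => [Hi|[r Hi]]; subst i; first by rewrite mjm_t.
rewrite mjm_x; case: (eqVneq (part r) j) => // /H; done.
Qed.

End Mj.
Lemma norm_le_sum (T : eqType) (s : seq T) (f : T -> RR) x :
  x \in s -> `|f x| <= \sum_(y <- s) `|f y|.
Proof.
elim: s => [//|a s IH]; rewrite in_cons big_cons => /orP[/eqP->|/IH H].
  by rewrite -[X in X <= _]addr0 lerD ?sumr_ge0.
by apply: (le_trans H); rewrite -[X in X <= _]add0r lerD.
Qed.

Lemma Hfin_wt omt omx (l : 'I_m -> RR) : (forall r, 0 < l r) ->
  forall D lo hi : RR, exists s : seq RR, forall nu : MN,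
    Lf l nu <= D -> lo <= wt omt omx nu -> wt omt omx nu <= hi -> wt omt omx nu \in s.
Proof.
move=> lpos D lo hi.
pose K := (\sum_(r < m) Num.bound `|D / l r|).+1.
have Hx : forall nu : MN, Lf l nu <= D -> forall r, (nu (xv r) < K)%N.
  move=> nu HL r.
  have H1 : l r * (nu (xv r))%:R <= D.
    apply: le_trans HL; rewrite /Lf (bigD1 r) //= -[X in X <= _]addr0 lerD //.
    by apply: sumr_ge0 => i _; rewrite mulr_ge0 // ltW.
  have H2 : (nu (xv r))%:R < (Num.bound `|D / l r|)%:R :> RR.
    apply: le_lt_trans (archi_boundP (normr_ge0 _)).
    apply: le_trans (ler_norm _); rewrite ler_pdivlMr // mulrC //.
  rewrite ltr_nat in H2; rewrite ltnS; apply: leq_trans (ltnW H2) _.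
  by rewrite (bigD1 r) //= leq_addr.
pose X := map (fun a : {ffun 'I_m -> 'I_K} => \sum_(r < m) omx r * (val (a r))%:R)
            (enum {: {ffun 'I_m -> 'I_K}}).
pose Xa := \sum_(x <- X) `|x|.
pose K2 := (Num.bound ((`|lo| + `|hi| + Xa) / `|omt|)).+1.
exists [seq omt * (k%:R) + x | k <- iota 0 K2, x <- X].
move=> nu HL Hlo Hhi.
pose xp := \sum_(r < m) omx r * (nu (xv r))%:R.
have xpX : xp \in X.
  apply/mapP; exists [ffun r => Ordinal (Hx nu HL r)]; first by rewrite mem_enum.
  by apply: eq_bigr => r _; rewrite ffunE.
have Ew : wt omt omx nu = omt * (nu (tv m))%:R + xp by [].
apply/allpairsP; exists (if omt == 0 then 0%N else nu (tv m), xp).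
split; [|exact: xpX|]; last by rewrite Ew /=; case: eqP => [->|]; rewrite ?mul0r.
rewrite mem_iota add0n; case: eqP => // /eqP omt0.
rewrite /= /K2 ltnS; apply: ltnW; rewrite -(ltr_nat RR); apply: le_lt_trans (archi_boundP _); last first.
  by apply: divr_ge0 => //; rewrite !addr_ge0 // sumr_ge0.
rewrite ler_pdivlMr ?normr_gt0 // mulrC.
rewrite -[X in _ * X](ger0_norm (ler0n RR (nu (tv m)))) -normrM.
have -> : omt * (nu (tv m))%:R = wt omt omx nu - xp by rewrite Ew addrK.
have hw : `|wt omt omx nu| <= `|lo| + `|hi|.
  case: (lerP 0 (wt omt omx nu)) => H.
    rewrite ger0_norm //; apply: le_trans Hhi _; apply: le_trans (ler_norm _) _.
    by rewrite lerDr.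
  rewrite ltr0_norm //; rewrite lerNl; apply: le_trans Hlo; rewrite lerNl.
  by apply: le_trans (ler_norm _) _; rewrite normrN lerDl.
have hx : `|xp| <= Xa by apply: (norm_le_sum id xpX).
apply: le_trans (ler_normB _ _) _; exact: lerD hw hx.
Qed.

End Basic.

Section Lead.
Variables (m c : nat) (part : 'I_m -> 'I_c) (g : 'I_c -> {mpoly CC[m.+1]}).
Local Notation MN := 'X_{1..m.+1}.

Lemma suppG j (b' : MN) : b' \in msupp ('X_(tv m) * g j) ->
  exists2 b, b \in msupp (g j) & b' = (U_(tv m) + b)%MM.
Proof.
rewrite mulrC (perm_mem (msuppMX _ _)) => /mapP [b bg ->]; by exists b.
Qed.

Lemma suppG_in j (b : MN) : b \in msupp (g j) -> (U_(tv m) + b)%MM \in msupp ('X_(tv m) * g j).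
Proof. by move=> bg; rewrite mulrC (perm_mem (msuppMX _ _)); apply: map_f. Qed.

Variables (ord : rel MN) (omt : RR) (omx : 'I_m -> RR) (l : 'I_m -> RR).
Hypothesis lpos : forall r, 0 < l r.
Hypothesis HLg : forall j b, b \in msupp (g j) -> Lf l b = Lf l (mjm part j).
Hypothesis Hstrict : forall j b, b \in msupp (g j) ->
  wt omt omx (U_(tv m) + b)%MM < wt omt omx (mjm part j).

Local Notation w := (wt omt omx).

Lemma HGc j b' : b' \in msupp ('X_(tv m) * g j) ->
  w b' < w (mjm part j) /\ Lf l b' = Lf l (mjm part j).
Proof.
move=> /suppG [b bg ->]; split; first exact: (Hstrict bg).
by rewrite LfD Lf_U add0r (HLg bg).
Qed.

Lemma lead_I0 : lead_ideal_is_I0 part g ord omt omx.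
Proof.
move=> mu; split.
  move=> [f [[h Ef] [fn0 [mu0 [[mu0f Hlead] Hle]]]]].
  have wm : wmax w f mu0.
    split => // nu nuf; case: (eqVneq nu mu0) => [->//|ne].
    by case: (Hlead _ nuf ne) => [/ltW|[-> _]].
  have Ef2 : f = \sum_(j < c) h j * FF (mjm part) (fun j => 'X_(tv m) * g j) j.
    by rewrite Ef; apply: eq_bigr => j _; rewrite /FF mj_X addrC.
  have [j Hj] := ideal_lead (@wtD m omt omx) (@LfD m l) HGc (@mjm_cop m c part)
     (Hfin_wt omt omx lpos) Ef2 wm.
  exists j; apply/mjm_le; exact: lepm_trans Hj Hle.
move=> [j /mjm_le Hj].
pose f := 'X_[mu - mjm part j] * ('X_(tv m) * g j + mj part j).
have Ef : f = 'X_[mu] + 'X_[mu - mjm part j] * ('X_(tv m) * g j).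
  by rewrite /f mulrDr addrC mj_X -mpolyXD submK.
have Hlow : forall nu, nu \in msupp ('X_[mu - mjm part j] * ('X_(tv m) * g j)) -> w nu < w mu.
  move=> nu Hnu; have := supp_mul_lt (@wtD m omt omx) (x := w (mu - mjm part j)%MM)
     (y := w (mjm part j)) _ _ Hnu.
  rewrite -wtD submK //; apply.
    by move=> x; rewrite msuppX mem_seq1 => /eqP->.
  by move=> x /HGc [].
have muf : mu \in msupp f.
  rewrite mcoeff_msupp Ef mcoeffD mcoeffX eqxx (coef_out (p := _ * _)) ?addr0 ?oner_eq0 //.
  by apply/negP => /Hlow; rewrite ltxx.
exists f; split.
  exists (fun i => if i == j then 'X_[mu - mjm part j] else 0).
  rewrite (bigD1 j) //= eqxx big1 ?addr0 // => i /negbTE ->; by rewrite mul0r.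
split; first by apply/eqP => f0; move: muf; rewrite f0 msupp0.
exists mu; split; last exact: lepm_refl.
split => // nu; rewrite Ef => /msuppD_le; rewrite mem_cat msuppX mem_seq1.
case/orP => [/eqP -> /eqP//|/Hlow H _]; by left.
Qed.

End Lead.

Section LeadEx.
Variables (m : nat) (ord : rel 'X_{1..m.+1}) (omt : RR) (omx : 'I_m -> RR).
Hypothesis Hord : monomial_order ord.
Local Notation MN := 'X_{1..m.+1}.
Local Notation w := (wt omt omx).

Definition gtb (x y : MN) := (w y < w x) || ((w x == w y) && ord x y).

Lemma gtbP x y : reflect (gt_om ord omt omx x y) (gtb x y).
Proof.
rewrite /gtb /gt_om; apply: (iffP orP) => [[H|/andP[/eqP H1 H2]]|[H|[H1 H2]]].
- by left.
- by right.
- by left.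
- by right; rewrite H1 eqxx H2.
Qed.

Lemma gtb_trans x y z : gtb x y -> gtb y z -> gtb x z.
Proof.
case: Hord => _ [Htr _].
rewrite /gtb => /orP[H1|/andP[/eqP E1 O1]] /orP[H2|/andP[/eqP E2 O2]].
- by rewrite (lt_trans H2 H1).
- by rewrite -E2 H1.
- by rewrite E1 H2.
- by rewrite E1 E2 eqxx (Htr _ _ _ O1 O2) orbT.
Qed.

Lemma gtb_total x y : x != y -> gtb x y || gtb y x.
Proof.
case: Hord => _ [_ [Htot _]] ne; rewrite /gtb.
case: (ltgtP (w x) (w y)) => //= E.
by rewrite ?E ?eqxx /=; apply: Htot.
Qed.

Lemma gtb_max (s : seq MN) : s != [::] ->
  exists2 x, x \in s & forall y, y \in s -> y != x -> gtb x y.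
Proof.
elim: s => [//|a s IH] _.
case: s IH => [|b s] IH.
  by exists a; rewrite ?mem_seq1 // => y; rewrite mem_seq1 => ->.
have [x xs Hx] := IH isT.
case: (boolP (gtb a x)) => Hax.
  exists a; first by rewrite in_cons eqxx.
  move=> y; rewrite in_cons => /orP[/eqP->|ys]; first by rewrite eqxx.
  move=> ya; case: (eqVneq y x) => [->//|yx]; exact: gtb_trans Hax (Hx _ ys yx).
exists x; first by rewrite in_cons xs orbT.
move=> y; rewrite in_cons => /orP[/eqP->|ys yx]; last exact: Hx.
by move=> ax; move: (gtb_total ax); rewrite (negbTE Hax).
Qed.

Lemma exists_lead (f : {mpoly CC[m.+1]}) : f != 0 -> exists mu0, is_lead ord omt omx mu0 f.
Proof.
move=> fn0; have sn : msupp f != [::] by rewrite msupp_eq0.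
have [x xs Hx] := gtb_max sn.
by exists x; split => // nu nuf ne; apply/gtbP; apply: Hx.
Qed.

End LeadEx.

Section Fwd.
Variables (m c : nat) (part : 'I_m -> 'I_c) (g : 'I_c -> {mpoly CC[m.+1]}).
Variables (ord : rel 'X_{1..m.+1}) (omt : RR) (omx : 'I_m -> RR).
Hypothesis Hord : monomial_order ord.
Hypothesis HI0 : lead_ideal_is_I0 part g ord omt omx.
Hypothesis Hg : forall j b, b \in msupp (g j) -> ~ mon_in_I0 part b.
Local Notation MN := 'X_{1..m.+1}.
Local Notation w := (wt omt omx).

Lemma Ut_ne_mjm j (b : MN) : (U_(tv m) + b)%MM != mjm part j.
Proof.
apply/eqP => /(congr1 (fun x : MN => x (tv m))); rewrite mnmDE mnm1E eqxx mjm_t.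
by rewrite add1n.
Qed.

Lemma mon_in_I0_U (b : MN) : mon_in_I0 part (U_(tv m) + b)%MM -> mon_in_I0 part b.
Proof.
move=> [j H]; exists j => r /H; by rewrite mnmDE mnm1E eq_sym xv_tv add0n.
Qed.

Lemma lead_fwd j b : b \in msupp (g j) ->
  w (U_(tv m) + b)%MM <= w (mjm part j).
Proof.
move=> bg.
pose F := 'X_(tv m) * g j + mj part j.
have c1 : F@_(mjm part j) = 1.
  rewrite mcoeffD mj_X mcoeffX eqxx coef_out ?add0r //.
  by apply/negP => /suppG [b' _ E]; move: (Ut_ne_mjm j b'); rewrite -E eqxx.
have Fn0 : F != 0 by apply/eqP => F0; move: c1; rewrite F0 mcoeff0 => /eqP; rewrite eq_sym oner_eq0.
have FI : in_I part g F.
  exists (fun i => (i == j)%:R); rewrite (bigD1 j) //= eqxx mul1r big1 ?addr0 //.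
  by move=> i /negbTE ->; rewrite mul0r.
have [mu0 [mu0F Hl]] := exists_lead omt omx Hord Fn0.
have mu0E : mu0 = mjm part j.
  move: (mu0F); rewrite /F mj_X => /msuppD_le; rewrite mem_cat msuppX mem_seq1.
  case/orP => [/suppG [b' b'g E]|/eqP//].
  have : mon_in_I0 part mu0.
    apply/(HI0 mu0); exists F; split => //; split => //; exists mu0; split.
      by split.
    exact: lepm_refl.
  by rewrite E => /mon_in_I0_U /(Hg b'g).
have UbF : (U_(tv m) + b)%MM \in msupp F.
  have Hne : (mjm part j == (U_(tv m) + b)%MM) = false.
    by rewrite eq_sym; apply/negbTE/Ut_ne_mjm.
  rewrite mcoeff_msupp mcoeffD mj_X mcoeffX Hne addr0.
  by rewrite mulrC mcoeffMX -mcoeff_msupp.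
have := Hl _ UbF; rewrite mu0E (negbTE (Ut_ne_mjm j b)) => /(_ isT) [/ltW//|[-> _]] //.
Qed.

End Fwd.

Section Conv.
Variables (n m c : nat) (v : 'I_m -> 'I_n -> int) (part : 'I_m -> 'I_c).
Local Notation MN := 'X_{1..m.+1}.

Lemma sumA_phi (wx : 'I_n -> RR) phi (u : 'I_n -> int) : is_phi v wx phi ->
  \sum_(r < m) ((Amap v u r)%:~R) * phi r = pairR wx u.
Proof.
move=> Hphi; rewrite /pairR /Amap /pairZ.
under eq_bigr do rewrite rmorph_sum mulr_suml.
rewrite exchange_big /=; apply: eq_bigr => i _.
rewrite -Hphi mulr_suml; apply: eq_bigr => r _.
by rewrite intrM; lra.
Qed.

Lemma xdot_diff wx phi j (b : MN) u : is_phi v wx phi ->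
  (forall r, xexp b r = Amap v u r + eJ part j r) ->
  xdot b phi = xdot (mjm part j) phi + pairR wx u.
Proof.
move=> Hphi Hb; rewrite -(sumA_phi u Hphi) /xdot -big_split /=.
apply: eq_bigr => r _.
have : ((b (xv r))%:R : RR) = (xexp b r)%:~R by [].
rewrite Hb intrD /eJ mjm_x => ->; rewrite mulrDl addrC; congr (_ + _).
Qed.

Lemma wt_Ub omt phi (b : MN) : b (tv m) = 0%N ->
  wt omt phi (U_(tv m) + b)%MM = omt + xdot b phi.
Proof.
move=> bt; rewrite wtD wt_U; congr (_ + _).
rewrite /wt bt mulr0 add0r /xdot; apply: eq_bigr => r _; exact: mulrC.
Qed.

Lemma wt_mjm omt phi j : wt omt phi (mjm part j) = xdot (mjm part j) phi.
Proof.
rewrite /wt mjm_t mulr0 add0r /xdot; apply: eq_bigr => r _; exact: mulrC.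
Qed.

Lemma Lf_xdot l (b : MN) : Lf l b = xdot b l.
Proof. by rewrite /Lf /xdot; apply: eq_bigr => r _; exact: mulrC. Qed.

Lemma gmon_u j (b : MN) : gmon v part j b ->
  exists u, forall r, xexp b r = Amap v u r + eJ part j r.
Proof.
move=> [_ [[u Hu] _]]; exists u => r; by rewrite -Hu subrK.
Qed.

Lemma pairR0 (u : 'I_n -> int) : pairR (fun _ => 0) u = 0.
Proof. by rewrite /pairR big1 // => i _; rewrite mul0r. Qed.

Lemma Lf_gmon l j (b : MN) : (forall i, \sum_(r < m) l r * (v r i)%:~R = 0) ->
  gmon v part j b -> Lf l b = Lf l (mjm part j).
Proof.
move=> Hl /gmon_u [u Hu].
have Hphi : is_phi v (fun _ => 0) l by [].
by rewrite !Lf_xdot (xdot_diff Hphi Hu) pairR0 addr0.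
Qed.

Lemma msupp_mj j : msupp (mj part j) = [:: mjm part j].
Proof. by rewrite mj_X msuppX. Qed.

Lemma foldr_min (T : Type) (F : T -> RR) (s : seq T) init x t :
  x <= foldr (fun b acc => Num.min (F b) acc) init s + t <->
  x <= init + t /\ (forall b, List.In b s -> x <= F b + t).
Proof.
elim: s => [|a s IH] /=; first by split => [H|[]//]; split.
rewrite -lerBlDr le_min !lerBlDr; split.
  move=> /andP [H1 /IH [H2 H3]]; split => // b [<-//|]; exact: H3.
move=> [H1 H2]; apply/andP; split; first by apply: H2; left.
by apply/IH; split => // b Hb; apply: H2; right.
Qed.

Lemma InP (T : eqType) (x : T) (s : seq T) : List.In x s <-> x \in s.
Proof.
elim: s => [//|a s IH] /=; rewrite in_cons; split.
  by case=> [->|/IH ->]; rewrite ?eqxx ?orbT.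
by case/orP => [/eqP->|/IH]; [left|right].
Qed.

Lemma le_plus_trop x (f : {mpoly CC[m.+1]}) phi t :
  le_plus (Some x) (trop f phi) t <-> (forall b, b \in msupp f -> x <= xdot b phi + t).
Proof.
rewrite /trop; case: (msupp f) => [|a s] /=; first by split.
rewrite foldr_min; split.
  move=> [H1 H2] b; rewrite in_cons => /orP[/eqP->//|bs]; apply: H2.
  by apply/InP.
move=> H; split; first by apply: H; rewrite in_cons eqxx.
by move=> b /InP bs; apply: H; rewrite in_cons bs orbT.
Qed.

End Conv.

Lemma span_phi n m (v : 'I_m -> 'I_n -> int) : reflexive_facets v ->
  forall wx : 'I_n -> RR, exists phi, is_phi v wx phi.
Proof.
move=> [[B HB] _] wx.
pose V : 'M[RR]_(m, n) := \matrix_(r, i) (v r i)%:~R.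
have HV : row_full V.
  apply/negPn/negP => Hnf.
  have Hr : (\rank V < n)%N by rewrite ltn_neqAle Hnf rank_leq_col.
  pose K := kermx V^T.
  have K0 : K != 0 by rewrite -mxrank_eq0 mxrank_ker mxrank_tr subn_eq0 -ltnNge Hr.
  have [i0 Hi0] : exists i0, row i0 K != 0.
    apply/existsP; apply: contraR K0 => /existsPn H; apply/eqP/row_matrixP => i.
    by rewrite row0; apply/eqP; move: (H i); rewrite negbK.
  set z := row i0 K in Hi0.
  have zV : z *m V^T = 0 by rewrite /z -row_mul mulmx_ker row0.
  have [i1 Hi1] : exists i1, z 0 i1 != 0.
    apply/existsP; apply: contraR Hi0 => /existsPn H; apply/eqP/matrixP => a b.
    by rewrite (ord1 a) [RHS]mxE; apply/eqP; move: (H b); rewrite negbK.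
  have orth : forall r, \sum_i z 0 i * (v r i)%:~R = 0.
    move=> r; move/matrixP: zV => /(_ 0 r); rewrite !mxE => E; rewrite -[RHS]E.
    by apply: eq_bigr => i _; rewrite !mxE.
  pose lam := (`|B| + 1) / `|z 0 i1|.
  have HD : in_Delta v (fun i => lam * z 0 i).
    move=> r; rewrite /pairR.
    have -> : \sum_(i < n) lam * z 0 i * (v r i)%:~R = lam * \sum_i z 0 i * (v r i)%:~R.
      by rewrite mulr_sumr; apply: eq_bigr => i _; rewrite mulrA.
    by rewrite orth mulr0 lerN10.
  have := HB _ HD i1; rewrite normrM /lam normf_div normr_id mulrAC.
  rewrite -mulrA divff ?normr_eq0 // mulr1 ger0_norm ?addr_ge0 //.
  by move=> H; move: (le_trans H (ler_norm B)); rewrite gerDl ler10.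
have /submxP [x Hx] : ((\row_i wx i) <= V)%MS by apply: submx_full.
exists (fun r => x 0 r) => i.
move/matrixP: Hx => /(_ 0 i); rewrite !mxE => ->.
by apply: eq_bigr => r _; rewrite mxE.
Qed.

Definition decP (P : Prop) : bool :=
  if excluded_middle_informative P then true else false.

Lemma decPP (P : Prop) : decP P <-> P.
Proof. by rewrite /decP; case: excluded_middle_informative. Qed.

Section Enum.
Variables (n m c : nat) (v : 'I_m -> 'I_n -> int) (part : 'I_m -> 'I_c).
Local Notation MN := 'X_{1..m.+1}.

Definition mkm (k : 'I_m -> nat) : MN := (\sum_(r < m) U_(xv r) *+ k r)%MM.

Lemma mkm_x k r : mkm k (xv r) = k r.
Proof.
rewrite /mkm mnm_sumE (bigD1 r) //= mulmnE mnm1E eqxx mul1n big1 ?addn0 //.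
by move=> r' /negbTE H; rewrite mulmnE mnm1E (inj_eq (@xv_inj m)) H.
Qed.

Lemma mkm_t k : mkm k (tv m) = 0%N.
Proof. by rewrite /mkm mnm_sumE big1 // => r _; rewrite mulmnE mnm1E xv_tv. Qed.

Lemma mkm_eq (b : MN) : b (tv m) = 0%N -> b = mkm (fun r => b (xv r)).
Proof.
move=> bt; apply/mnmP => i; case: (ord_split i) => [Hi|[r Hi]]; subst i.
  by rewrite mkm_t.
by rewrite mkm_x.
Qed.

Lemma pairR_int (u : 'I_n -> int) r :
  pairR (fun i => (u i)%:~R) (v r) = (Amap v u r)%:~R.
Proof. by rewrite /pairR /Amap /pairZ rmorph_sum; apply: eq_bigr => i _; rewrite rmorphM. Qed.

Lemma enum_gmons : reflexive_facets v ->
  exists N (e : 'I_N -> 'I_c * MN), enumerates_gmons v part e.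
Proof.
move=> [[B HB] _].
pose K := Num.bound B.
have uK : forall j b, gmon v part j b -> exists u, (forall r, xexp b r = Amap v u r + eJ part j r)
   /\ forall i, (`|u i| < K)%N.
  move=> j b Hb; have [u Hu] := gmon_u Hb; exists u; split => // i.
  have HD : in_Delta v (fun i => (u i)%:~R).
    move=> r; rewrite pairR_int.
    have : (-1 <= Amap v u r)%R.
      have := Hu r; rewrite /xexp /eJ => E.
      have : (Amap v u r = (b (xv r))%:Z - ((part r == j) : nat)%:Z)%R by rewrite E addrK.
      by move=> ->; case: (part r == j) => /=; lia.
    by move=> H; rewrite -(ler_int RR) in H.
  have := HB _ HD i; rewrite -intr_norm => H.
  have B0 : 0 <= B by apply: le_trans H; rewrite ler0z normr_ge0.
  have : ((`|u i|%N)%:R : RR) < K%:R.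
    by rewrite natr_absz; exact: le_lt_trans H (archi_boundP B0).
  by rewrite ltr_nat.
pose T := {ffun 'I_n -> 'I_(K + K).+1}.
pose uof (a : T) := fun i => ((val (a i))%:Z - K%:Z)%R.
pose cand j (a : T) : 'I_c * MN := (j, mkm (fun r => absz (Amap v (uof a) r + eJ part j r))).
pose cands := [seq cand j a | j <- enum 'I_c, a <- enum T].
pose s := undup (filter (fun p => decP (gmon v part p.1 p.2)) cands).
exists (size s), (tnth (in_tuple s)).
split; first by apply/tuple_uniqP; exact: undup_uniq.
move=> j mu; split; last first.
  move=> [k Ek]; have : (j, mu) \in s by rewrite -Ek mem_tnth.
  by rewrite mem_undup mem_filter => /andP [/decPP].
move=> Hg; have [u [Hu HuK]] := uK _ _ Hg.
have inS : (j, mu) \in s.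
  rewrite mem_undup mem_filter; apply/andP; split; first by apply/decPP.
  have Ha : forall i, (absz (u i + K%:Z)%R < (K + K).+1)%N.
    by move=> i; have := HuK i; lia.
  pose a : T := [ffun i => Ordinal (Ha i)].
  have Eu : forall i, uof a i = u i.
    move=> i; rewrite /uof ffunE /=; have := HuK i; lia.
  apply/allpairsP; exists (j, a); split; rewrite ?mem_enum //= /cand.
  congr (_, _); rewrite (mkm_eq (proj1 Hg)) /mkm; apply: eq_bigr => r _.
  have -> : Amap v (uof a) r = Amap v u r.
    by rewrite /Amap /pairZ; apply: eq_bigr => i _; rewrite Eu.
  by rewrite -Hu.
exists (Ordinal (etrans (index_mem (j, mu) s) inS)).
by rewrite (tnth_nth (j, mu)) /= nth_index.
Qed.

End Enum.

Unset Implicit Arguments.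
Set Strict Implicit.

Lemma pairRN n (qx : 'I_n -> RR) u : pairR (fun i => - qx i) u = - pairR qx u.
Proof. by rewrite /pairR -sumrN; apply: eq_bigr => i _; rewrite mulNr. Qed.

Lemma pairR_diff n (wx qx : 'I_n -> RR) (u : 'I_n -> int) eps :
  (forall i, `|wx i - qx i| < eps) ->
  `|pairR wx u - pairR qx u| <= eps * \sum_i `|(u i)%:~R : RR|.
Proof.
move=> H; rewrite /pairR -sumrB mulr_sumr; apply: le_trans (ler_norm_sum _ _ _) _.
apply: ler_sum => i _; rewrite -mulrBl normrM; apply: ler_wpM2r; first exact: normr_ge0.
exact: ltW.
Qed.

Lemma lim_ge0 (x C : RR) : 0 < C -> (forall eps, 0 < eps -> - (eps * C) <= x) -> 0 <= x.
Proof.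
move=> C0 H; rewrite leNgt; apply/negP => Hx.
have e0 : 0 < - x / (C *+ 2) by rewrite divr_gt0 ?oppr_gt0 // mulrn_wgt0.
have := H _ e0.
have -> : - x / (C *+ 2) * C = - x / 2.
  field; rewrite ?pnatr_eq0 //; exact: lt0r_neq0.
lra.
Qed.

Lemma trop_mj m c (part : 'I_m -> 'I_c) j phi :
  trop (mj part j) phi = Some (xdot (mjm part j) phi).
Proof. by rewrite /trop msupp_mj. Qed.

Theorem mainTheorem3 (n m c : nat) (v : 'I_m -> 'I_n -> int) (part : 'I_m -> 'I_c) :
  reflexive_facets v ->
  nef_partition v part ->
  (* for general g_j: outside the zero locus of a nonzero polynomial P in the coefficients *)
  exists (N : nat) (e : 'I_N -> 'I_c * 'X_{1..m.+1}) (P : {mpoly CC[N]}),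
    enumerates_gmons v part e /\ P != 0 /\
    forall g : 'I_c -> {mpoly CC[m.+1]},
      g_support v part g ->
      P.@[coeff_vector e g] != 0 ->
      forall ord : rel 'X_{1..m.+1},
        monomial_order ord -> local_in_t ord -> respects_cox_grading v ord ->
        forall (wt_ : RR) (wx : 'I_n -> RR),
          (groebner_cone_I0 v part g ord wt_ wx <->
             (forall (j : 'I_c) (phi : 'I_m -> RR), is_phi v wx phi ->
                le_plus (trop (mj part j) phi) (trop (g j) phi) wt_)) /\
          (groebner_cone_I0 v part g ord wt_ wx <->
             (forall (j : 'I_c) (u : 'I_n -> int),
                (exists mu, mu \in msupp (g j) /\
                   forall r, xexp mu r = Amap v u r + eJ part j r) ->
                0 <= wt_ + pairR wx u)).
Proof.
move=> Hrefl Hnef.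
have [N [e He]] := enum_gmons part Hrefl.
exists N, e, 1; split => //; split; first exact: oner_neq0.
move=> g Hg _ ord Hord Hloc [l [lpos [lv _]]] wt_ wx.
have gmonS : forall j b, b \in msupp (g j) -> gmon v part j b by move=> j b /Hg.
have nI0 : forall j b, b \in msupp (g j) -> ~ mon_in_I0 part b.
  by move=> j b /gmonS [_ [_ H]].
pose cond2 := forall j u, (exists mu, mu \in msupp (g j) /\
   forall r, xexp mu r = Amap v u r + eJ part j r) -> 0 <= wt_ + pairR wx u.
have Ha : groebner_cone_I0 v part g ord wt_ wx -> cond2.
  move=> Hcl j u [mu [mug Hmu]].
  pose C := 1 + \sum_i `|(u i)%:~R : RR|.
  have C0 : 0 < C by rewrite ltr_pwDl ?sumr_ge0.
  apply: (lim_ge0 _ _ C0) => eps eps0.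
  have [qt [qx [Hpre [Ht Hx]]]] := Hcl eps eps0.
  have [phi Hphi] := span_phi Hrefl (fun i => - qx i).
  have HI0 := Hpre phi Hphi.
  have := lead_fwd Hord HI0 nI0 mug.
  rewrite wt_Ub ?(proj1 (gmonS _ _ mug)) // wt_mjm (xdot_diff Hphi Hmu) pairRN => H.
  have := @pairR_diff _ _ _ u _ Hx; rewrite ler_norml => /andP [D1 D2].
  move: Ht => /ltr_normlP [T1 T2].
  rewrite /C mulrDr mulr1; lra.
have Hb : cond2 -> groebner_cone_I0 v part g ord wt_ wx.
  move=> H2 eps eps0; exists (wt_ + eps / 2), wx; split; [|split].
  - move=> phi Hphi; apply: (lead_I0 ord lpos).
      by move=> j b /gmonS; apply: Lf_gmon.
    move=> j b bg; have [u Hu] := gmon_u (gmonS _ _ bg).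
    have := H2 j u (ex_intro _ b (conj bg Hu)).
    rewrite wt_Ub ?(proj1 (gmonS _ _ bg)) // wt_mjm (xdot_diff Hphi Hu) pairRN.
    lra.
  - rewrite opprD addrA subrr sub0r normrN ger0_norm; lra.
  - by move=> i; rewrite subrr normr0.
have Hc : (forall (j : 'I_c) (phi : 'I_m -> RR), is_phi v wx phi ->
                le_plus (trop (mj part j) phi) (trop (g j) phi) wt_) <-> cond2.
  split.
    move=> H1 j u [mu [mug Hmu]]; have [phi Hphi] := span_phi Hrefl wx.
    have := H1 j phi Hphi; rewrite trop_mj le_plus_trop => /(_ mu mug).
    rewrite (xdot_diff Hphi Hmu); lra.
  move=> H2 j phi Hphi; rewrite trop_mj; apply/le_plus_trop => b bg.
  have [u Hu] := gmon_u (gmonS _ _ bg).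
  have := H2 j u (ex_intro _ b (conj bg Hu)).
  rewrite (xdot_diff Hphi Hu); lra.
split; split.
- by move/Ha/Hc.
- by move/Hc/Hb.
- exact: Ha.
- exact: Hb.
Qed.
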